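(* Let $u_{\varepsilon,\ell}$ be a 3iet word with parameters $\varepsilon,\ell$, and let the continued fraction $\varepsilon=[0,a_1,a_2,a_3,\dots]$ have bounded partial quotients. Then $$ {\rm ind}(u_{\varepsilon,\ell})\geq \sup_{n\in\mathbb N} \Big\lfloor \frac{a_n}{2}\Big\rfloor\,. $$
   Context: Parameters $\varepsilon,\ell$ satisfy $\varepsilon\in(0,1)\setminus\mathbb Q$ and $\max\{\varepsilon,1-\varepsilon\}<\ell<1$. The three interval exchange $T_{\varepsilon,\ell}:[0,\ell)\to[0,\ell)$ is defined by $T_{\varepsilon,\ell}(x)=x+1-\varepsilon$ for $x\in I_A:=[0,\ell-1+\varepsilon)$, $T_{\varepsilon,\ell}(x)=x+1-2\varepsilon$ for $x\in I_B:=[\ell-1+\varepsilon,\varepsilon)$, and $T_{\varepsilon,\ell}(x)=x-\varepsilon$ for $x\in I_C:=[\varepsilon,\ell)$. A 3iet word with parameters $\varepsilon,\ell$ is the word $u=(u_n)_{n\in\mathbb N}$ over $\{A,B,C\}$ with $u_n=X$ iff $T_{\varepsilon,\ell}^n(x_0)\in I_X$, for some $x_0\in[0,\ell)$; its language and index do not depend on $x_0$. A word $v$ is a power $w^r$ ($r=|v|/|w|$) if $|v|\ge|w|$ and $v$ is a prefix of $www\cdots$; ${\rm ind}(w)=\sup\{r\in\mathbb Q: w^r \text{ is a factor of } u\}$ and ${\rm ind}(u)=\sup\{{\rm ind}(w): w \text{ a factor of } u\}$. *)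

(* Defs.v *)
From Stdlib Require Import Reals QArith List ZArith.
From Coquelicot Require Import Coquelicot.
Open Scope R_scope.

Definition T3 (eps l x : R) : R :=
  if Rlt_dec x (l - 1 + eps) then x + 1 - eps
  else if Rlt_dec x eps then x + 1 - 2 * eps
  else x - eps.

Inductive letter := LA | LB | LC.

Definition letter_eq_dec (a b : letter) : {a = b} + {a <> b}.
Proof. decide equality. Defined.

Definition letter_of (eps l x : R) : letter :=
  if Rlt_dec x (l - 1 + eps) then LA
  else if Rlt_dec x eps then LB
  else LC.

Definition iet3_word (eps l x0 : R) (n : nat) : letter :=
  letter_of eps l (Nat.iter n (T3 eps l) x0).

Definition is_factor (u : nat -> letter) (w : list letter) : Prop :=
  exists i : nat, forall j : nat, (j < length w)%nat -> nth j w LA = u (i + j)%nat.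

(* v is a power w^r of w (r = |v|/|w|): |v| >= |w| and v is a prefix of www... *)
Definition is_power_of (v w : list letter) : Prop :=
  (0 < length w)%nat /\ (length w <= length v)%nat /\
  forall j : nat, (j < length v)%nat -> nth j v LA = nth (j mod length w) w LA.

Definition ind_word (u : nat -> letter) (w : list letter) : Rbar :=
  Lub_Rbar (fun r : R => exists v : list letter,
    is_factor u v /\ is_power_of v w /\ r = INR (length v) / INR (length w)).

(* ind(u) = sup { ind(w) : w a (nonempty) factor of u }, expressed as the
   supremum of the reals lying below some ind(w) (so that ind(w) = +oo is
   handled correctly). *)
Definition ind_inf (u : nat -> letter) : Rbar :=
  Lub_Rbar (fun r : R => exists w : list letter,
    w <> nil /\ is_factor u w /\ Rbar_le (Finite r) (ind_word u w)).

(* Continued fraction of eps in (0,1): Gauss map iterates x_0 = eps,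
   x_{n+1} = 1/x_n - floor(1/x_n); partial quotients a_{n+1} = floor(1/x_n),
   so that eps = [0; a_1, a_2, ...]. *)
Definition gauss_iter (eps : R) (n : nat) : R :=
  Nat.iter n (fun x => / x - IZR (Int_part (/ x))) eps.

Definition cf_quotient (eps : R) (n : nat) : Z :=
  Int_part (/ gauss_iter eps (n - 1)).

Definition irrational (x : R) : Prop := ~ exists q : Q, x = Q2R q.

(* Main.v *)
Require Import Defs.
From Stdlib Require Import Reals QArith List ZArith.
From Coquelicot Require Import Coquelicot.
From Stdlib Require Import Qreals Lra Lia Psatz Classical Arith.
Open Scope R_scope.

Lemma Q2R_inject (z : Z) : Q2R (inject_Z z) = IZR z.
Proof. unfold Q2R; simpl. field. Qed.

Lemma gauss_S eps i :
  gauss_iter eps (S i) = / gauss_iter eps i - IZR (Int_part (/ gauss_iter eps i)).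
Proof. reflexivity. Qed.

Lemma gauss_ok eps : 0 < eps < 1 -> irrational eps ->
  forall i, 0 < gauss_iter eps i < 1 /\ irrational (gauss_iter eps i).
Proof.
  intros He Hi. induction i as [|i [[H1 H2] H3]]; [simpl; tauto|].
  rewrite gauss_S. set (x := gauss_iter eps i) in *.
  destruct (base_Int_part (/ x)) as [B1 B2].
  assert (Hneq : / x - IZR (Int_part (/ x)) <> 0).
  { intro E. apply H3. exists (Qinv (inject_Z (Int_part (/ x)))).
    rewrite Q2R_inv.
    - rewrite Q2R_inject. assert (/ x = IZR (Int_part (/x))) by lra.
      rewrite <- H. field. lra.
    - intro Hq. apply Qeq_eqR in Hq. rewrite Q2R_inject in Hq.
      assert (0 < / x) by (apply Rinv_0_lt_compat; lra).
      rewrite RMicromega.Q2R_0 in Hq. lra. }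
  split; [split; lra|].
  intros [q Hq]. apply H3.
  exists (Qinv (q + inject_Z (Int_part (/ x)))).
  assert (Hx : / x = Q2R q + IZR (Int_part (/x))) by lra.
  rewrite Q2R_inv.
  - rewrite Q2R_plus, Q2R_inject, <- Hx. field. lra.
  - intro Hq0. apply Qeq_eqR in Hq0. rewrite Q2R_plus, Q2R_inject, <- Hx in Hq0.
    rewrite RMicromega.Q2R_0 in Hq0.
    assert (0 < / x) by (apply Rinv_0_lt_compat; lra). lra.
Qed.

Definition Aq eps i : Z := Int_part (/ gauss_iter eps i).

Fixpoint cq eps (i : nat) : Z * Z :=
  match i with O => (0%Z, 1%Z)
  | S i => let '(a, b) := cq eps i in (b, (Aq eps i * b + a)%Z) end.
Fixpoint cp eps (i : nat) : Z * Z :=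
  match i with O => (1%Z, 0%Z)
  | S i => let '(a, b) := cp eps i in (b, (Aq eps i * b + a)%Z) end.
Definition Qd eps i := fst (cq eps i).
Definition Pn eps i := fst (cp eps i).
Definition Ee eps i := IZR (Qd eps i) * eps - IZR (Pn eps i).

Lemma cq_snd eps i : snd (cq eps i) = Qd eps (S i).
Proof. unfold Qd; simpl. destruct (cq eps i); reflexivity. Qed.
Lemma cp_snd eps i : snd (cp eps i) = Pn eps (S i).
Proof. unfold Pn; simpl. destruct (cp eps i); reflexivity. Qed.

Lemma Qd_rec eps i : Qd eps (S (S i)) = (Aq eps i * Qd eps (S i) + Qd eps i)%Z.
Proof.
  rewrite <- !cq_snd. unfold Qd. simpl. destruct (cq eps i); reflexivity.
Qed.
Lemma Pn_rec eps i : Pn eps (S (S i)) = (Aq eps i * Pn eps (S i) + Pn eps i)%Z.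
Proof.
  rewrite <- !cp_snd. unfold Pn. simpl. destruct (cp eps i); reflexivity.
Qed.
Lemma Qd0 eps : Qd eps 0 = 0%Z. Proof. reflexivity. Qed.
Lemma Qd1 eps : Qd eps 1 = 1%Z. Proof. reflexivity. Qed.
Lemma Pn0 eps : Pn eps 0 = 1%Z. Proof. reflexivity. Qed.
Lemma Pn1 eps : Pn eps 1 = 0%Z. Proof. reflexivity. Qed.

Lemma Aq_ge1 eps : 0 < eps < 1 -> irrational eps -> forall i, (1 <= Aq eps i)%Z.
Proof.
  intros He Hi i. destruct (gauss_ok eps He Hi i) as [[H1 H2] _].
  unfold Aq. destruct (base_Int_part (/ gauss_iter eps i)) as [B1 B2].
  assert (1 < / gauss_iter eps i).
  { rewrite <- Rinv_1. apply Rinv_lt_contravar; lra. }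
  assert (0 < IZR (Int_part (/ gauss_iter eps i))) by lra.
  apply lt_IZR in H0. lia.
Qed.

Lemma Qd_pos eps : 0 < eps < 1 -> irrational eps ->
  forall i, (1 <= Qd eps (S i))%Z /\ (Qd eps i <= Qd eps (S i))%Z.
Proof.
  intros He Hi i.
  assert (H : (0 <= Qd eps i)%Z /\ (1 <= Qd eps (S i))%Z /\ (Qd eps i <= Qd eps (S i))%Z).
  { induction i as [|i [IH0 [IH1 IH2]]].
    - rewrite Qd0, Qd1; lia.
    - rewrite Qd_rec. pose proof (Aq_ge1 eps He Hi i). nia. }
  tauto.
Qed.

Lemma det eps i : (Pn eps i * Qd eps (S i) - Pn eps (S i) * Qd eps i = 1 \/
                   Pn eps i * Qd eps (S i) - Pn eps (S i) * Qd eps i = -1)%Z.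
Proof.
  induction i as [|i IH].
  - rewrite Qd0, Qd1, Pn0, Pn1. lia.
  - rewrite Qd_rec, Pn_rec.
    assert (Pn eps (S i) * (Aq eps i * Qd eps (S i) + Qd eps i) -
      (Aq eps i * Pn eps (S i) + Pn eps i) * Qd eps (S i) =
      - (Pn eps i * Qd eps (S i) - Pn eps (S i) * Qd eps i))%Z by ring.
    lia.
Qed.

Lemma Ee_rec eps : 0 < eps < 1 -> irrational eps ->
  forall i, Ee eps (S i) = - gauss_iter eps i * Ee eps i.
Proof.
  intros He Hi. induction i as [|i IH].
  - unfold Ee. rewrite Qd0, Qd1, Pn0, Pn1. simpl. lra.
  - assert (Ee eps (S (S i)) = IZR (Aq eps i) * Ee eps (S i) + Ee eps i).
    { unfold Ee. rewrite Qd_rec, Pn_rec, !plus_IZR, !mult_IZR. ring. }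
    rewrite H. rewrite gauss_S. fold (Aq eps i).
    destruct (gauss_ok eps He Hi i) as [[H1 H2] _].
    assert (Ee eps i = - Ee eps (S i) / gauss_iter eps i).
    { rewrite IH. field. lra. }
    rewrite H0. field. lra.
Qed.

Lemma Ee_sign eps : 0 < eps < 1 -> irrational eps ->
  forall i, Ee eps i <> 0 /\ Ee eps i * Ee eps (S i) < 0.
Proof.
  intros He Hi. induction i as [|i [IH1 IH2]].
  - rewrite Ee_rec by auto. unfold Ee; rewrite Qd0, Pn0. simpl.
    split; [lra|]. nra.
  - split; [nra|]. rewrite (Ee_rec eps He Hi (S i)).
    destruct (gauss_ok eps He Hi (S i)) as [[H1 H2] _].
    assert (Ee eps (S i) <> 0) by nra. 
    assert (0 < Ee eps (S i) * Ee eps (S i)) by nra. nra.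
Qed.

Lemma best_approx eps : 0 < eps < 1 -> irrational eps ->
  forall i (d P : Z), (0 < d < Qd eps (S (S i)))%Z ->
  Rabs (Ee eps (S i)) <= Rabs (IZR d * eps - IZR P).
Proof.
  intros He Hi i d P Hd.
  set (q1 := Qd eps (S i)). set (q2 := Qd eps (S (S i))).
  set (p1 := Pn eps (S i)). set (p2 := Pn eps (S (S i))).
  destruct (Qd_pos eps He Hi i) as [Hq1 _].
  destruct (Qd_pos eps He Hi (S i)) as [_ Hq2].
  fold q1 q2 in Hq1, Hq2, Hd.
  assert (Hab : exists a b : Z, d = (a * q1 + b * q2)%Z /\ P = (a * p1 + b * p2)%Z).
  { destruct (det eps (S i)) as [D|D]; fold q1 q2 p1 p2 in D.
    - exists ((P * q2 - d * p2))%Z, ((d * p1 - P * q1))%Z. split.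
      + transitivity (d * (p1 * q2 - p2 * q1))%Z; [rewrite D; ring | ring].
      + transitivity (P * (p1 * q2 - p2 * q1))%Z; [rewrite D; ring | ring].
    - exists (-(P * q2 - d * p2))%Z, (-(d * p1 - P * q1))%Z. split.
      + transitivity (- d * (p1 * q2 - p2 * q1))%Z; [rewrite D; ring | ring].
      + transitivity (- P * (p1 * q2 - p2 * q1))%Z; [rewrite D; ring | ring]. }
  destruct Hab as [a [b [Hd' HP]]].
  assert (Hr : IZR d * eps - IZR P = IZR a * Ee eps (S i) + IZR b * Ee eps (S (S i))).
  { unfold Ee. fold q1 q2 p1 p2. rewrite Hd', HP, !plus_IZR, !mult_IZR. ring. }
  rewrite Hr.
  destruct (Ee_sign eps He Hi (S i)) as [E1 E2].
  set (e1 := Ee eps (S i)) in *. set (e2 := Ee eps (S (S i))) in *.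
  assert (Hc : ((b = 0 /\ (a >= 1 \/ a <= -1)) \/ (a >= 1 /\ b <= -1) \/ (a <= -1 /\ b >= 1))%Z) .
  { destruct (Z.lt_total a 0) as [Ha|[Ha|Ha]]; destruct (Z.lt_total b 0) as [Hb|[Hb|Hb]].
    - exfalso. assert (a * q1 <= 0)%Z by nia. assert (b * q2 < 0)%Z by nia. lia.
    - left; lia.
    - right; right; lia.
    - subst. exfalso. assert (b * q2 < 0)%Z by nia. lia.
    - subst. lia.
    - subst. exfalso. assert (q2 <= b * q2)%Z by nia. lia.
    - right; left; lia.
    - left; lia.
    - exfalso. assert (0 < a * q1)%Z by nia. assert (q2 <= b * q2)%Z by nia. lia. }
  destruct Hc as [[-> [Ha|Ha]] | [[Ha Hb]|[Ha Hb]]];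
    apply IZR_ge in Ha || apply IZR_le in Ha;
    try (apply IZR_ge in Hb || apply IZR_le in Hb);
    simpl in *;
    unfold Rabs; repeat destruct Rcase_abs; nra.
Qed.

Definition Rr eps x := if Rlt_dec (x - eps) 0 then x - eps + 1 else x - eps.
Definition zz eps x0 j := Nat.iter j (Rr eps) x0.
Definition cR eps l x := if Rlt_dec x l then Some (letter_of eps l x) else None.

Lemma zz_S eps x0 j : zz eps x0 (S j) = Rr eps (zz eps x0 j).
Proof. reflexivity. Qed.

Lemma zz_range eps x0 j : 0 < eps < 1 -> 0 <= x0 < 1 -> 0 <= zz eps x0 j < 1.
Proof.
  intros He Hx. induction j; [simpl; lra|].
  rewrite zz_S. unfold Rr. destruct Rlt_dec; lra.
Qed.

Lemma zz_int eps x0 j : exists K : Z, zz eps x0 j = x0 - INR j * eps + IZR K.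
Proof.
  induction j as [|j [K HK]].
  - exists 0%Z. simpl. lra.
  - rewrite zz_S, S_INR. unfold Rr. destruct Rlt_dec.
    + exists (K + 1)%Z. rewrite plus_IZR. lra.
    + exists K. lra.
Qed.

Lemma zz_diff eps x0 j d : exists K : Z,
  zz eps x0 (j + d) - zz eps x0 j = - INR d * eps + IZR K.
Proof.
  destruct (zz_int eps x0 j) as [K1 H1]. destruct (zz_int eps x0 (j+d)) as [K2 H2].
  exists (K2 - K1)%Z. rewrite H1, H2, minus_IZR, plus_INR. ring.
Qed.

Lemma cR_lt eps l x y : cR eps l x = cR eps l y -> x < l -> y < l.
Proof.
  unfold cR. intros H Hx. destruct (Rlt_dec x l); destruct (Rlt_dec y l); auto; try lra; discriminate.
Qed.

Lemma cR_letter eps l x y : cR eps l x = cR eps l y -> x < l ->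
  letter_of eps l x = letter_of eps l y.
Proof.
  unfold cR. intros H Hx. destruct (Rlt_dec x l); [|lra].
  destruct (Rlt_dec y l); [|discriminate]. congruence.
Qed.

Fixpoint sgm eps l x0 (k : nat) : nat :=
  match k with O => O
  | S k => let s := sgm eps l x0 k in
           if Rlt_dec (zz eps x0 (S s)) l then S s else S (S s) end.

Lemma sgm_S eps l x0 k : sgm eps l x0 (S k) =
  if Rlt_dec (zz eps x0 (S (sgm eps l x0 k))) l then S (sgm eps l x0 k)
  else S (S (sgm eps l x0 k)).
Proof. reflexivity. Qed.

Lemma T_R eps l y : 0 < eps < 1 -> Rmax eps (1 - eps) < l -> l < 1 -> 0 <= y < l ->
  T3 eps l y = if Rlt_dec (Rr eps y) l then Rr eps y else Rr eps (Rr eps y).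
Proof.
  intros He Hl1 Hl2 Hy.
  assert (eps < l /\ 1 - eps < l) as [Ha Hb].
  { split; eapply Rle_lt_trans; eauto; [apply Rmax_l | apply Rmax_r]. }
  unfold T3, Rr.
  repeat (destruct Rlt_dec); lra.
Qed.

Lemma T_sig eps l x0 : 0 < eps < 1 -> Rmax eps (1 - eps) < l -> l < 1 -> 0 <= x0 < l ->
  forall k, Nat.iter k (T3 eps l) x0 = zz eps x0 (sgm eps l x0 k) /\
            zz eps x0 (sgm eps l x0 k) < l.
Proof.
  intros He Hl1 Hl2 Hx.
  assert (eps < l /\ 1 - eps < l) as [Ha Hb].
  { split; eapply Rle_lt_trans; eauto; [apply Rmax_l | apply Rmax_r]. }
  induction k as [|k [IH1 IH2]]; [simpl; split; [reflexivity|lra]|].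
  change (Nat.iter (S k) (T3 eps l) x0) with (T3 eps l (Nat.iter k (T3 eps l) x0)).
  rewrite IH1. simpl sgm.
  pose proof (zz_range eps x0 (sgm eps l x0 k) He ltac:(lra)).
  rewrite T_R by (auto; lra).
  repeat rewrite zz_S. idtac.
  match goal with |- _ => idtac end. destruct (Rlt_dec (Rr eps (zz eps x0 (sgm eps l x0 k))) l).
  - split; auto.
  - split; auto. unfold zz in *. simpl. unfold Rr in *. repeat destruct Rlt_dec; lra.
Qed.

Lemma sig_step eps l x0 k : (S (sgm eps l x0 k) <= sgm eps l x0 (S k) <= S (S (sgm eps l x0 k)))%nat.
Proof. simpl. destruct Rlt_dec; lia. Qed.

Lemma sig_mono eps l x0 k k' : (k < k')%nat -> (sgm eps l x0 k < sgm eps l x0 k')%nat.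
Proof.
  intros H. induction H.
  - pose proof (sig_step eps l x0 k); lia.
  - pose proof (sig_step eps l x0 m); lia.
Qed.

Lemma sig_mono_le eps l x0 k k' : (k <= k')%nat -> (sgm eps l x0 k <= sgm eps l x0 k')%nat.
Proof.
  intros H. destruct (Nat.eq_dec k k'). subst; lia.
  pose proof (sig_mono eps l x0 k k'); lia.
Qed.

Lemma sig_surj eps l x0 : forall j, zz eps x0 j < l -> exists k, sgm eps l x0 k = j.
Proof.
  intros j Hj.
  assert (H : exists k, (sgm eps l x0 k <= j < sgm eps l x0 (S k))%nat).
  { clear Hj. induction j as [|j [k Hk]].
    - exists O. pose proof (sig_step eps l x0 0). simpl sgm at 1. lia.
    - destruct (Nat.lt_ge_cases (S j) (sgm eps l x0 (S k))).
      + exists k; lia.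
      + exists (S k). pose proof (sig_step eps l x0 k). pose proof (sig_step eps l x0 (S k)). lia. }
  destruct H as [k Hk]. exists k.
  destruct (Nat.eq_dec (sgm eps l x0 k) j); auto. exfalso.
  revert Hk. simpl sgm. destruct Rlt_dec; intros; try lia.
  assert (j = S (sgm eps l x0 k)) by lia. subst. apply n0. exact Hj.
Qed.

Lemma iet_sig eps l x0 : 0 < eps < 1 -> Rmax eps (1 - eps) < l -> l < 1 -> 0 <= x0 < l ->
  forall k, iet3_word eps l x0 k = letter_of eps l (zz eps x0 (sgm eps l x0 k)).
Proof.
  intros. unfold iet3_word. destruct (T_sig eps l x0 H H0 H1 H2 k) as [-> _]. auto.
Qed.

Lemma transfer eps l x0 : 0 < eps < 1 -> Rmax eps (1 - eps) < l -> l < 1 -> 0 <= x0 < l ->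
  forall s q m, zz eps x0 s < l -> (1 <= q)%nat -> (2 <= m)%nat ->
  (forall j, (s <= j < s + (m - 1) * q)%nat ->
       cR eps l (zz eps x0 (j + q)) = cR eps l (zz eps x0 j)) ->
  exists t p, (1 <= p)%nat /\ forall i, (i < (m - 1) * p)%nat ->
     iet3_word eps l x0 (t + i + p) = iet3_word eps l x0 (t + i).
Proof.
  intros He Hl1 Hl2 Hx s q m Hs Hq Hm Hper.
  set (N := ((m - 1) * q)%nat) in *.
  set (sg := sgm eps l x0).
  destruct (sig_surj eps l x0 s Hs) as [k0 Hk0].
  assert (Hsq : zz eps x0 (s + q) < l).
  { eapply cR_lt; [symmetry; apply Hper|]; auto. unfold N; nia. }
  destruct (sig_surj eps l x0 (s+q) Hsq) as [k1 Hk1].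
  assert (k0 < k1)%nat.
  { destruct (Nat.lt_ge_cases k0 k1); auto.
    pose proof (sig_mono_le eps l x0 k1 k0 H). lia. }
  set (p := (k1 - k0)%nat).
  assert (HA : forall i, (sg (k0 + i) < s + N)%nat -> sg (k0 + i + p)%nat = (sg (k0 + i) + q)%nat).
  { induction i as [|i IH]; intros Hi.
    - unfold sg, p. replace (k0 + 0 + (k1 - k0))%nat with k1 by lia.
      replace (k0+0)%nat with k0 by lia. lia.
    - assert (Hlt : (sg (k0 + i) < sg (k0 + S i))%nat) by (apply sig_mono; lia).
      specialize (IH ltac:(lia)).
      assert (Hge : (s <= sg (k0 + i))%nat) by (rewrite <- Hk0; apply sig_mono_le; lia).
      pose proof (sig_step eps l x0 (k0 + i)) as Hst. fold sg in Hst.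
      replace (k0 + S i)%nat with (S (k0 + i)) in * by lia.
      replace (S (k0 + i) + p)%nat with (S (k0 + i + p)) by lia.
      unfold sg in *. rewrite !sgm_S. rewrite IH.
      set (a := sgm eps l x0 (k0 + i)) in *.
      assert (Hj := Hper (S a) ltac:(lia)).
      replace (S (a + q)) with (S a + q)%nat by lia.
      destruct (Rlt_dec (zz eps x0 (S a + q)) l) as [r1|r1];
      destruct (Rlt_dec (zz eps x0 (S a)) l) as [r2|r2]; try lia.
      + exfalso. apply r2. eapply cR_lt; [apply Hj|]. auto.
      + exfalso. apply r1. eapply cR_lt; [symmetry; apply Hj|]. auto. }
  assert (HC : forall j, (j <= m - 1)%nat -> sg (k0 + j * p)%nat = (s + j * q)%nat).
  { induction j as [|j IH]; intros Hj.
    - replace (k0 + 0 * p)%nat with k0 by lia. unfold sg; lia.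
    - specialize (IH ltac:(lia)).
      replace (k0 + S j * p)%nat with (k0 + j * p + p)%nat by lia.
      rewrite HA; [rewrite IH; lia|]. rewrite IH. unfold N. nia. }
  exists k0, p. split; [lia|].
  intros i Hi.
  assert (Hsi : (sg (k0 + i) < s + N)%nat).
  { unfold N. rewrite <- (HC (m-1)%nat) by lia. apply sig_mono. lia. }
  assert (Hge : (s <= sg (k0 + i))%nat) by (rewrite <- Hk0; apply sig_mono_le; lia).
  rewrite !iet_sig by auto. fold sg. rewrite HA by auto.
  symmetry. apply cR_letter.
  - symmetry. apply Hper. lia.
  - apply (T_sig eps l x0 He Hl1 Hl2 Hx).
Qed.

Lemma nth_map_seq (f : nat -> letter) n j d : (j < n)%nat ->
  nth j (map f (seq 0 n)) d = f j.
Proof.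
  intros H. rewrite (nth_indep _ d (f 0%nat)) by (rewrite length_map, length_seq; auto).
  rewrite map_nth, seq_nth by auto. reflexivity.
Qed.

Lemma ind_word_ge u w v : is_factor u v -> is_power_of v w ->
  Rbar_le (INR (length v) / INR (length w)) (ind_word u w).
Proof.
  intros Hf Hp. unfold ind_word.
  destruct (Lub_Rbar_correct (fun r : R => exists v : list letter,
    is_factor u v /\ is_power_of v w /\ r = INR (length v) / INR (length w))) as [Hub _].
  apply Hub. exists v. auto.
Qed.

Lemma ind_inf_ge u w r : w <> nil -> is_factor u w -> Rbar_le (Finite r) (ind_word u w) ->
  Rbar_le r (ind_inf u).
Proof.
  intros H1 H2 H3. unfold ind_inf.
  destruct (Lub_Rbar_correct (fun r : R => exists w : list letter,
    w <> nil /\ is_factor u w /\ Rbar_le (Finite r) (ind_word u w))) as [Hub _].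
  apply Hub. exists w. auto.
Qed.

Lemma power_ind u (m : nat) : (1 <= m)%nat ->
  (exists t p, (1 <= p)%nat /\ forall i, (i < (m - 1) * p)%nat -> u (t + i + p)%nat = u (t + i)%nat) ->
  Rbar_le (INR m) (ind_inf u).
Proof.
  intros Hm [t [p [Hp Hper]]].
  set (f := fun i => u (t + i)%nat).
  set (w := map f (seq 0 p)). set (v := map f (seq 0 (m * p))).
  assert (Lw : length w = p) by (unfold w; rewrite length_map, length_seq; auto).
  assert (Lv : length v = (m * p)%nat) by (unfold v; rewrite length_map, length_seq; auto).
  assert (Hpow : forall j, (j < m * p)%nat -> u (t + j)%nat = u (t + j mod p)%nat).
  { intros j. induction j as [j IH] using lt_wf_ind. intros Hj.
    destruct (Nat.lt_ge_cases j p).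
    - rewrite Nat.mod_small; auto.
    - replace j with ((j - p) + p)%nat by lia.
      rewrite Nat.add_assoc, Hper by nia.
      replace (j - p + p)%nat with ((j - p) + 1 * p)%nat by lia.
      rewrite Nat.Div0.mod_add by lia. apply IH; nia. }
  apply (ind_inf_ge u w).
  - intro E. rewrite E in Lw. simpl in Lw. lia.
  - exists t. intros j Hj. rewrite Lw in Hj. unfold w. rewrite nth_map_seq; auto.
  - eapply Rbar_le_trans; [|apply (ind_word_ge u w v)].
    + rewrite Lv, Lw, mult_INR. simpl. apply Req_le. field. apply not_0_INR. lia.
    + exists t. intros j Hj. rewrite Lv in Hj. unfold v. rewrite nth_map_seq; auto.
    + split; [rewrite Lw; lia|]. split; [rewrite Lw, Lv; nia|]. intros j Hj. rewrite Lv in Hj. rewrite Lw.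
      unfold v, w. rewrite !nth_map_seq; auto.
      * unfold f. apply Hpow; auto.
      * apply Nat.mod_upper_bound. lia.
Qed.

Lemma ind_inf_ge1 u : Rbar_le 1 (ind_inf u).
Proof.
  replace 1 with (INR 1) by reflexivity. apply power_ind; auto.
  exists O, 1%nat. split; auto. intros i Hi. lia.
Qed.

Lemma not_in a b x : ~ (a <= x < b) -> x < a \/ b <= x.
Proof. intros H. destruct (Rlt_le_dec x a); auto. right. destruct (Rlt_le_dec x b); auto. exfalso; auto. Qed.

Definition inJ1 (d x : R) := (0 < d /\ 1 - d <= x < 1) \/ (d < 0 /\ 0 <= x < - d).
Definition inJ2 (l d x : R) := (0 < d /\ l - d <= x < l) \/ (d < 0 /\ l <= x < l - d).

Lemma int_small (K : Z) : -1 < IZR K < 1 -> K = 0%Z.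
Proof.
  intros [H1 H2]. apply lt_IZR in H1. apply lt_IZR in H2. lia.
Qed.

Lemma agree eps l z z' d (K : Z) : 0 < eps < 1 -> Rmax eps (1 - eps) < l -> l < 1 ->
  0 <= z < 1 -> 0 <= z' < 1 -> z' = z + d + IZR K -> d <> 0 ->
  ~ inJ1 d z -> ~ inJ2 l d z -> ~ inJ1 d (Rr eps z) -> ~ inJ2 l d (Rr eps z) ->
  cR eps l z' = cR eps l z.
Proof.
  intros He Hl1 Hl2 Hz Hz' Hzz Hd N1 N2 N3 N4.
  assert (eps < l /\ 1 - eps < l) as [Ha Hb].
  { split; eapply Rle_lt_trans; eauto; [apply Rmax_l | apply Rmax_r]. }
  unfold inJ1, inJ2 in *.
  destruct (Rlt_le_dec 0 d) as [Hp|Hn].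
  - assert (A1 : ~ (1 - d <= z < 1)) by tauto.
    assert (A2 : ~ (l - d <= z < l)) by tauto.
    assert (A3 : ~ (1 - d <= Rr eps z < 1)) by tauto.
    assert (A4 : ~ (l - d <= Rr eps z < l)) by tauto.
    apply not_in in A1, A2, A3, A4.
    assert (K = 0%Z) by (apply int_small; destruct A1; lra). subst K. simpl in Hzz.
    unfold Rr in A3, A4. unfold cR, letter_of.
    destruct (Rlt_dec (z - eps) 0); destruct A1; destruct A2; destruct A3; destruct A4;
      try lra; repeat destruct Rlt_dec; try reflexivity; lra.
  - assert (Hn' : d < 0) by lra.
    assert (A1 : ~ (0 <= z < - d)) by tauto.
    assert (A2 : ~ (l <= z < l - d)) by tauto.
    assert (A3 : ~ (0 <= Rr eps z < - d)) by tauto.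
    assert (A4 : ~ (l <= Rr eps z < l - d)) by tauto.
    apply not_in in A1, A2, A3, A4.
    assert (K = 0%Z) by (apply int_small; destruct A1; lra). subst K. simpl in Hzz.
    unfold Rr in A3, A4. unfold cR, letter_of.
    destruct (Rlt_dec (z - eps) 0); destruct A1; destruct A2; destruct A3; destruct A4;
      try lra; repeat destruct Rlt_dec; try reflexivity; lra.
Qed.

Definition sparse (V : nat -> Prop) (D : nat) :=
  forall j j', (j < j')%nat -> V j -> V j' -> (j + D <= j')%nat.

Lemma run_main (V1 V2 : nat -> Prop) D L b1 :
  sparse V1 D -> sparse V2 D -> V1 b1 -> (2 * L + 3 <= D)%nat ->
  exists g, forall j, (g <= j < g + L)%nat ->
    ~ V1 j /\ ~ V2 j /\ ~ V1 (S j) /\ ~ V2 (S j).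
Proof.
  intros S1 S2 H1 HD.
  assert (HV1 : forall j, (b1 < j < b1 + D)%nat -> ~ V1 j).
  { intros j Hj Hv. specialize (S1 b1 j ltac:(lia) H1 Hv). lia. }
  destruct (classic (exists b2, (b1 < b2 < b1 + D)%nat /\ V2 b2)) as [[b2 [Hb2 Hv2]]|Hno].
  - assert (HV2 : forall j, (b1 < j < b1 + D)%nat -> j <> b2 -> ~ V2 j).
    { intros j Hj Hne Hv. destruct (Nat.lt_ge_cases j b2).
      - specialize (S2 j b2 H Hv Hv2). lia.
      - specialize (S2 b2 j ltac:(lia) Hv2 Hv). lia. }
    destruct (Nat.le_gt_cases (b1 + 2 + L) b2).
    + exists (S b1). intros j Hj.
      repeat split; [apply HV1|apply HV2|apply HV1|apply HV2]; lia.
    + exists (S b2). intros j Hj.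
      repeat split; [apply HV1|apply HV2|apply HV1|apply HV2]; lia.
  - exists (S b1). intros j Hj.
    repeat split; try (apply HV1; lia); intro Hv; apply Hno; eexists; split; eauto; lia.
Qed.

Lemma run_lemma (V1 V2 : nat -> Prop) D L :
  sparse V1 D -> sparse V2 D -> (2 * L + 3 <= D)%nat ->
  exists g, forall j, (g <= j < g + L)%nat ->
    ~ V1 j /\ ~ V2 j /\ ~ V1 (S j) /\ ~ V2 (S j).
Proof.
  intros S1 S2 HD.
  destruct (classic (exists b, V1 b)) as [[b1 Hb1]|N1].
  - eapply run_main; eauto.
  - destruct (classic (exists b, V2 b)) as [[b2 Hb2]|N2].
    + destruct (run_main V2 V1 D L b2 S2 S1 Hb2 HD) as [g Hg].
      exists g. intros j Hj. specialize (Hg j Hj). tauto.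
    + exists O. intros j _. repeat split; intro; eauto.
Qed.

Lemma Qd_nonneg eps : 0 < eps < 1 -> irrational eps -> forall i, (0 <= Qd eps i)%Z.
Proof.
  intros He Hi [|i]; [rewrite Qd0; lia|]. destruct (Qd_pos eps He Hi i); lia.
Qed.

Lemma J1_close d x y : inJ1 d x -> inJ1 d y -> Rabs (x - y) < Rabs d.
Proof. unfold inJ1. intros H1 H2. unfold Rabs; repeat destruct Rcase_abs; lra. Qed.
Lemma J2_close l d x y : inJ2 l d x -> inJ2 l d y -> Rabs (x - y) < Rabs d.
Proof. unfold inJ2. intros H1 H2. unfold Rabs; repeat destruct Rcase_abs; lra. Qed.

Lemma sparse_of eps x0 i (P : R -> Prop) : 0 < eps < 1 -> irrational eps ->
  (forall x y, P x -> P y -> Rabs (x - y) < Rabs (Ee eps (S i))) ->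
  sparse (fun j => P (zz eps x0 j)) (Z.to_nat (Qd eps (S (S i)))).
Proof.
  intros He Hi HP j j' Hjj' Pj Pj'.
  destruct (Nat.lt_ge_cases (j' - j) (Z.to_nat (Qd eps (S (S i))))) as [Hlt|Hge]; [|lia].
  exfalso.
  destruct (zz_diff eps x0 j (j' - j)) as [K HK].
  replace (j + (j' - j))%nat with j' in HK by lia.
  pose proof (best_approx eps He Hi i (Z.of_nat (j' - j)) K ltac:(lia)) as B.
  pose proof (HP _ _ Pj Pj') as C.
  rewrite <- INR_IZR_INZ in B.
  replace (zz eps x0 j - zz eps x0 j') with (INR (j' - j) * eps - IZR K) in C by lra.
  lra.
Qed.

Lemma general_case eps l x0 : 0 < eps < 1 -> irrational eps ->
  Rmax eps (1 - eps) < l -> l < 1 -> 0 <= x0 < l ->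
  forall i, (2 <= Aq eps i / 2)%Z -> (5 <= 2 * Qd eps (S i) + Qd eps i)%Z ->
  Rbar_le (IZR (Aq eps i / 2)) (ind_inf (iet3_word eps l x0)).
Proof.
  intros He Hi Hl1 Hl2 Hx i Hm H5.
  assert (eps < l /\ 1 - eps < l) as [Ha Hb].
  { split; eapply Rle_lt_trans; eauto; [apply Rmax_l | apply Rmax_r]. }
  set (A := Aq eps i) in *. set (m := (A / 2)%Z) in *.
  set (q := Qd eps (S i)) in *.
  set (d := - Ee eps (S i)).
  assert (Hd : d <> 0) by (destruct (Ee_sign eps He Hi (S i)); unfold d; lra).
  assert (Hrd : Rabs d = Rabs (Ee eps (S i))) by (unfold d; apply Rabs_Ropp).
  destruct (Qd_pos eps He Hi i) as [Hq1 _]. fold q in Hq1.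
  pose proof (Qd_nonneg eps He Hi i) as Hq0.
  pose proof (Qd_rec eps i) as HD. fold A q in HD.
  assert (HA : (2 * m <= A)%Z).
  { unfold m. pose proof (Z.mul_div_le A 2 ltac:(lia)). lia. }
  set (qn := Z.to_nat q). set (mn := Z.to_nat m).
  set (Dn := Z.to_nat (Qd eps (S (S i)))).
  assert (Eq : Z.of_nat qn = q) by (unfold qn; lia).
  assert (Em : Z.of_nat mn = m) by (unfold mn; lia).
  assert (ED : Z.of_nat Dn = Qd eps (S (S i))) by (unfold Dn; rewrite Z2Nat.id; [reflexivity|rewrite HD; nia]).
  set (L := ((mn - 1) * qn + 1)%nat).
  assert (HL : (2 * L + 3 <= Dn)%nat).
  { unfold L. assert (Z.of_nat (2 * ((mn - 1) * qn + 1) + 3) <= Z.of_nat Dn)%Z; [|lia].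
    rewrite ED, HD. rewrite Nat2Z.inj_add, Nat2Z.inj_mul, Nat2Z.inj_add, Nat2Z.inj_mul,
      Nat2Z.inj_sub by lia. rewrite Eq, Em. assert (A * q >= 2 * m * q)%Z by nia. lia. }
  destruct (run_lemma (fun j => inJ1 d (zz eps x0 j)) (fun j => inJ2 l d (zz eps x0 j)) Dn L)
    as [g Hg].
  { apply sparse_of; auto. intros; rewrite <- Hrd; apply J1_close; auto. }
  { apply sparse_of; auto. intros x y Hx1 Hy1; rewrite <- Hrd; exact (J2_close l d x y Hx1 Hy1). }
  { exact HL. }
  assert (Hs : exists s, (g <= s <= S g)%nat /\ zz eps x0 s < l).
  { destruct (Rlt_dec (zz eps x0 g) l).
    - exists g. split; [lia|auto].
    - exists (S g). split; [lia|]. rewrite zz_S. unfold Rr.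
      pose proof (zz_range eps x0 g He ltac:(lra)).
      destruct Rlt_dec; lra. }
  destruct Hs as [s [Hs1 Hs2]].
  assert (Hmn : (2 <= mn)%nat) by lia.
  assert (Hqn : (1 <= qn)%nat) by lia.
  destruct (transfer eps l x0 He Hl1 Hl2 Hx s qn mn Hs2 Hqn Hmn) as [t [p [Hp Hper]]].
  { intros j Hj.
    destruct (Hg j ltac:(unfold L in *; lia)) as [N1 [N2 [N3 N4]]].
    destruct (zz_diff eps x0 j qn) as [K HK].
    apply (agree eps l (zz eps x0 j) (zz eps x0 (j + qn)) d (K - Pn eps (S i))).
    all: try (apply zz_range; lra).
    all: try (rewrite <- zz_S; auto).
    all: try auto.
    rewrite minus_IZR. unfold d, Ee. fold q. rewrite <- Eq, <- INR_IZR_INZ. lra. }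
  replace (IZR m) with (INR mn) by (rewrite INR_IZR_INZ, Em; reflexivity).
  apply power_ind; [lia|]. exists t, p. auto.
Qed.

Lemma T_range eps l y : 0 < eps < 1 -> Rmax eps (1 - eps) < l -> l < 1 -> 0 <= y < l ->
  0 <= T3 eps l y < l.
Proof.
  intros He Hl1 Hl2 Hy.
  assert (eps < l /\ 1 - eps < l) as [Ha Hb].
  { split; eapply Rle_lt_trans; eauto; [apply Rmax_l | apply Rmax_r]. }
  unfold T3. repeat destruct Rlt_dec; lra.
Qed.

Lemma iter_range eps l x0 t : 0 < eps < 1 -> Rmax eps (1 - eps) < l -> l < 1 -> 0 <= x0 < l ->
  0 <= Nat.iter t (T3 eps l) x0 < l.
Proof.
  intros. induction t; simpl; auto. apply T_range; auto.
Qed.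

Lemma const_run eps l x0 (mn t : nat) (X : letter) : (1 <= mn)%nat ->
  (forall i, (i < mn)%nat -> letter_of eps l (Nat.iter (t + i) (T3 eps l) x0) = X) ->
  Rbar_le (INR mn) (ind_inf (iet3_word eps l x0)).
Proof.
  intros Hm H. apply power_ind; auto. exists t, 1%nat. split; auto.
  intros i Hi. unfold iet3_word. replace (t + i + 1)%nat with (t + (i + 1))%nat by lia.
  rewrite (H (i + 1)%nat) by lia. rewrite H by lia. reflexivity.
Qed.

Lemma special1 eps l x0 : 0 < eps < 1 -> irrational eps ->
  Rmax eps (1 - eps) < l -> l < 1 -> 0 <= x0 < l ->
  (2 <= Aq eps 0 / 2)%Z ->
  Rbar_le (IZR (Aq eps 0 / 2)) (ind_inf (iet3_word eps l x0)).
Proof.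
  intros He Hi Hl1 Hl2 Hx Hm.
  assert (eps < l /\ 1 - eps < l) as [Ha Hb].
  { split; eapply Rle_lt_trans; eauto; [apply Rmax_l | apply Rmax_r]. }
  set (a := Aq eps 0) in *. set (m := (a / 2)%Z) in *.
  assert (HA : (2 * m <= a)%Z).
  { unfold m. pose proof (Z.mul_div_le a 2 ltac:(lia)). lia. }
  assert (Ha1 : IZR a * eps <= 1).
  { destruct (base_Int_part (/ eps)) as [B1 _]. unfold a, Aq. simpl.
    apply (Rmult_le_compat_r eps) in B1; [|lra]. rewrite Rinv_l in B1; lra. }
  set (mn := Z.to_nat m).
  assert (Em : INR mn = IZR m) by (unfold mn; rewrite INR_IZR_INZ, Z2Nat.id; auto; lia).
  assert (Hm2 : (m + 2 <= a)%Z) by lia.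
  apply IZR_le in Hm2. rewrite plus_IZR in Hm2.
  assert (Hme : (IZR m + 2) * eps <= 1) by nra.
  assert (Hm2' : 2 <= IZR m) by (apply IZR_le; auto).
  set (T := T3 eps l).
  assert (Ex : exists t, IZR m * eps <= Nat.iter t T x0).
  { destruct (INR_archimed eps x0 ltac:(lra)) as [K HK].
    assert (forall K t, Nat.iter t T x0 < INR K * eps -> exists t', IZR m * eps <= Nat.iter t' T x0).
    { induction K0 as [|K0 IH]; intros t Ht.
      - pose proof (iter_range eps l x0 t He Hl1 Hl2 Hx). simpl in Ht. fold T in H. lra.
      - pose proof (iter_range eps l x0 t He Hl1 Hl2 Hx) as Hr. fold T in Hr.
        destruct (Rle_lt_dec (IZR m * eps) (Nat.iter t T x0)) as [h|h]; [eauto|].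
        destruct (Rlt_dec (Nat.iter t T x0) eps) as [h2|h2].
        + exists (S t). simpl. unfold T at 1, T3. repeat destruct Rlt_dec; lra.
        + apply (IH (S t)). simpl. unfold T at 1, T3. rewrite S_INR in Ht.
          repeat destruct Rlt_dec; lra. }
    apply (H K O). simpl. lra. }
  destruct Ex as [t Ht].
  rewrite <- Em. apply (const_run eps l x0 mn t LC); [lia|].
  set (y := Nat.iter t T x0) in *.
  pose proof (iter_range eps l x0 t He Hl1 Hl2 Hx) as Hy. fold T y in Hy.
  assert (Hrun : forall i, (i < mn)%nat -> Nat.iter (i + t) T x0 = y - INR i * eps).
  { induction i as [|i IH]; intros Hii.
    - simpl. fold y. lra.
    - rewrite S_INR. replace (S i + t)%nat with (S (i + t)) by lia.
      change (Nat.iter (S (i + t)) T x0) with (T (Nat.iter (i + t) T x0)).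
      rewrite IH by lia.
      assert (INR i <= IZR m - 1).
      { rewrite <- Em. replace 1 with (INR 1) by reflexivity. rewrite <- minus_INR by lia.
        apply le_INR. lia. }
      unfold T at 1, T3. repeat destruct Rlt_dec; nra. }
  intros i Hii. rewrite Nat.add_comm. fold T. rewrite Hrun by auto.
  assert (INR i <= IZR m - 1).
  { rewrite <- Em. replace 1 with (INR 1) by reflexivity. rewrite <- minus_INR by lia.
    apply le_INR. lia. }
  assert (0 <= INR i) by apply pos_INR.
  unfold letter_of. repeat destruct Rlt_dec; try reflexivity; nra.
Qed.

Lemma special2 eps l x0 : 0 < eps < 1 -> irrational eps ->
  Rmax eps (1 - eps) < l -> l < 1 -> 0 <= x0 < l ->
  Aq eps 0 = 1%Z -> (2 <= Aq eps 1 / 2)%Z ->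
  Rbar_le (IZR (Aq eps 1 / 2)) (ind_inf (iet3_word eps l x0)).
Proof.
  intros He Hi Hl1 Hl2 Hx H0 Hm.
  assert (eps < l /\ 1 - eps < l) as [Ha Hb].
  { split; eapply Rle_lt_trans; eauto; [apply Rmax_l | apply Rmax_r]. }
  assert (Hx1 : gauss_iter eps 1 = / eps - 1).
  { rewrite gauss_S. fold (Aq eps 0). rewrite H0. reflexivity. }
  assert (He2 : / eps < 2).
  { destruct (base_Int_part (/ eps)) as [_ B2]. unfold Aq in H0. simpl in H0.
    rewrite H0 in B2. lra. }
  assert (Heps : 1/2 < eps).
  { apply (Rmult_lt_compat_r eps) in He2; [|lra]. rewrite Rinv_l in He2; lra. }
  set (a := Aq eps 1) in *. set (m := (a / 2)%Z) in *.
  set (f := 1 - eps).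
  assert (HA : (2 * m <= a)%Z).
  { unfold m. pose proof (Z.mul_div_le a 2 ltac:(lia)). lia. }
  assert (Ha1 : IZR a * f <= eps).
  { destruct (base_Int_part (/ gauss_iter eps 1)) as [B1 _]. fold (Aq eps 1) a in B1.
    rewrite Hx1 in B1.
    assert (/ eps - 1 = f / eps) by (unfold f; field; lra).
    rewrite H in B1.
    assert (0 < f / eps) by (unfold f; apply Rdiv_lt_0_compat; lra).
    apply (Rmult_le_compat_r (f / eps)) in B1; [|lra].
    rewrite Rinv_l in B1 by lra.
    assert (IZR a * f <= eps * 1); [|lra].
    replace (IZR a * f) with (IZR a * (f / eps) * eps) by (field; lra).
    apply Rmult_le_compat_r with (r := eps) in B1; lra. }
  set (mn := Z.to_nat m).
  assert (Em : INR mn = IZR m) by (unfold mn; rewrite INR_IZR_INZ, Z2Nat.id; auto; lia).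
  assert (Hm2 : (m + 2 <= a)%Z) by lia.
  apply IZR_le in Hm2. rewrite plus_IZR in Hm2.
  assert (Hf : 0 < f) by (unfold f; lra).
  assert (Hme : (IZR m + 3) * f <= 1) by (unfold f in *; nra).
  assert (Hm2' : 2 <= IZR m) by (apply IZR_le; auto).
  set (T := T3 eps l).
  assert (Ex : exists t, Nat.iter t T x0 < l - IZR m * f).
  { destruct (INR_archimed f l ltac:(lra)) as [K HK].
    assert (forall K t, l - Nat.iter t T x0 < INR K * f -> exists t', Nat.iter t' T x0 < l - IZR m * f).
    { induction K0 as [|K0 IH]; intros t Ht.
      - pose proof (iter_range eps l x0 t He Hl1 Hl2 Hx). simpl in Ht. fold T in H. lra.
      - pose proof (iter_range eps l x0 t He Hl1 Hl2 Hx) as Hr. fold T in Hr.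
        destruct (Rlt_le_dec (Nat.iter t T x0) (l - IZR m * f)) as [h|h]; [eauto|].
        destruct (Rlt_dec (Nat.iter t T x0) (l - 1 + eps)) as [h2|h2].
        + apply (IH (S t)). simpl. unfold T at 1, T3. rewrite S_INR in Ht. unfold f in *.
          repeat destruct Rlt_dec; lra.
        + exists (S t). simpl. unfold T at 1, T3. unfold f in *.
          repeat destruct Rlt_dec; nra. }
    apply (H K O). simpl. pose proof Hx. lra. }
  destruct Ex as [t Ht].
  rewrite <- Em. apply (const_run eps l x0 mn t LA); [lia|].
  set (y := Nat.iter t T x0) in *.
  pose proof (iter_range eps l x0 t He Hl1 Hl2 Hx) as Hy. fold T y in Hy.
  assert (Hrun : forall i, (i < mn)%nat -> Nat.iter (i + t) T x0 = y + INR i * f).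
  { induction i as [|i IH]; intros Hii.
    - simpl. fold y. lra.
    - rewrite S_INR. replace (S i + t)%nat with (S (i + t)) by lia.
      change (Nat.iter (S (i + t)) T x0) with (T (Nat.iter (i + t) T x0)).
      rewrite IH by lia.
      assert (INR i <= IZR m - 1).
      { rewrite <- Em. replace 1 with (INR 1) by reflexivity. rewrite <- minus_INR by lia.
        apply le_INR. lia. }
      assert (0 <= INR i) by apply pos_INR.
      unfold T at 1, T3. unfold f in *. repeat destruct Rlt_dec; nra. }
  intros i Hii. rewrite Nat.add_comm. fold T. rewrite Hrun by auto.
  assert (INR i <= IZR m - 1).
  { rewrite <- Em. replace 1 with (INR 1) by reflexivity. rewrite <- minus_INR by lia.
    apply le_INR. lia. }
  assert (0 <= INR i) by apply pos_INR.
  unfold letter_of. unfold f in *. repeat destruct Rlt_dec; try reflexivity; nra.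
Qed.

Theorem proposition2 (eps l x0 : R) :
  0 < eps < 1 -> irrational eps ->
  Rmax eps (1 - eps) < l -> l < 1 ->
  0 <= x0 < l ->
  (exists M : Z, forall n : nat, (1 <= n)%nat -> (cf_quotient eps n <= M)%Z) ->
  Rbar_le
    (Lub_Rbar (fun r : R => exists n : nat, (1 <= n)%nat /\
        r = IZR (Z.div (cf_quotient eps n) 2)))
    (ind_inf (iet3_word eps l x0)).
Proof.
  intros He Hi Hl1 Hl2 Hx _.
  apply (proj2 (Lub_Rbar_correct _)).
  intros r [n [Hn ->]].
  assert (Hc : cf_quotient eps n = Aq eps (n - 1)) by reflexivity.
  rewrite Hc. set (i := (n - 1)%nat). clearbody i.
  destruct (Z_le_gt_dec (Aq eps i / 2) 1) as [Hle|Hgt].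
  - eapply Rbar_le_trans; [|apply ind_inf_ge1]. simpl. apply IZR_le. auto.
  - destruct (Z_le_gt_dec 5 (2 * Qd eps (S i) + Qd eps i)) as [H5|H5].
    + apply general_case; auto; lia.
    + destruct i as [|[|i]].
      * apply special1; auto; lia.
      * apply special2; auto; try lia.
        rewrite Qd_rec, Qd1, Qd0 in H5. pose proof (Aq_ge1 eps He Hi 0). lia.
      * exfalso. rewrite Qd_rec in H5.
        destruct (Qd_pos eps He Hi i) as [H1 _].
        destruct (Qd_pos eps He Hi (S i)) as [H2 _].
        pose proof (Aq_ge1 eps He Hi (S i)). nia.
Qed.
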